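(* Let $\kappa<0$ and let $u=u(r;u_0)$ be the solution of $\frac{d}{dr}\big(u'/\sqrt{1+u'^2}\big)=\kappa u$, $u(0)=u_0$, $u'(0)=0$, with $$-\sqrt{\frac{-2}\kappa}<u_0<0.$$ Let $R>0$ be the first positive zero of $u$. Then $$\frac1{\sqrt{-2\kappa}}<R<\sqrt{\frac{-2e}\kappa}.$$
   Context: Under the hypothesis on $u_0$, $u$ is defined on all of $\mathbb R$, periodic, increasing on $[0,R]$, and has positive zeros; it is the profile of a pendent $\kappa$-cylindrical surface. *)

(* Defs.v *)
From Stdlib Require Import Reals.
From Coquelicot Require Import Coquelicot.
Open Scope R_scope.

Definition is_cyl_profile (kappa u0 : R) (u du : R -> R) : Prop :=
  (forall r, is_derive u r (du r)) /\
  (forall r, is_derive (fun s => du s / sqrt (1 + (du s)^2)) r (kappa * u r)) /\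
  u 0 = u0 /\ du 0 = 0.

Definition first_pos_zero (u : R -> R) (Rz : R) : Prop :=
  0 < Rz /\ u Rz = 0 /\ (forall r, 0 < r < Rz -> u r <> 0).

(* Main.v *)
Require Import Defs.
From Stdlib Require Import Reals Lra.
From Coquelicot Require Import Coquelicot.
Open Scope R_scope.

Lemma dQ (kappa : R) (f g : R->R) df dg x : is_derive f x df -> is_derive g x dg -> 0 < 1 - f x ^2 -> is_derive (fun t => sqrt (1 - f t ^2) + kappa * g t ^2/2) x (-(2 * f x * df)/(2*sqrt (1 - f x ^2)) + kappa * g x * dg).
Proof. intros Hf Hg Hp. auto_derive.
 - split; [eexists; eassumption|]. split; [|split; [eexists; eassumption|auto]].
   replace (1 + - (f x * (f x * 1))) with (1 - f x ^2) by ring. auto.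
 - replace (Derive (fun x0 => f x0) x) with df by (symmetry; apply is_derive_unique; auto).
   replace (Derive (fun x0 => g x0) x) with dg by (symmetry; apply is_derive_unique; auto).
   replace (1 + - (f x * (f x * 1))) with (1 - f x ^2) by ring.
   field. apply Rgt_not_eq, sqrt_lt_R0; auto. Qed.

Lemma dJ (s : R) (f g : R->R) df dg x : is_derive f x df -> is_derive g x dg ->
  is_derive (fun t => f t * cos (s*t) + s * g t * sin (s*t)) x
   (df * cos (s*x) - f x * (s * sin (s*x)) + s * (dg * sin (s*x) + g x * (s * cos (s*x)))).
Proof. intros Hf Hg. auto_derive.
 - repeat split; eexists; eassumption.
 - replace (Derive (fun x0 => f x0) x) with df by (symmetry; apply is_derive_unique; auto).
   replace (Derive (fun x0 => g x0) x) with dg by (symmetry; apply is_derive_unique; auto).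
   ring. Qed.

Lemma mvt f df a b : (forall x, is_derive f x (df x)) -> a <= b ->
  exists c, a <= c <= b /\ f b - f a = df c * (b-a).
Proof. intros Hd Hab. destruct (MVT_gen f a b df) as [c [Hc Heq]].
 - intros; apply Hd.
 - intros; apply continuity_pt_filterlim; apply (ex_derive_continuous f); eexists; apply Hd.
 - exists c; rewrite Rmin_left, Rmax_right in Hc; auto. Qed.

Theorem mainTheorem18 (kappa u0 : R) (u du : R -> R) (Rz : R) :
  kappa < 0 ->
  - sqrt (-2 / kappa) < u0 < 0 ->
  is_cyl_profile kappa u0 u du ->
  first_pos_zero u Rz ->
  1 / sqrt (-2 * kappa) < Rz < sqrt (-2 * exp 1 / kappa).
Proof.
  intros Hk [Hu0l Hu0r] [Hdu [Hphi [Hu0 Hdu0]]] [HR [HuR Hnz]].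
  set (phi := fun s => du s / sqrt (1 + du s ^2)) in *.
  set (q := fun s => sqrt (1 + du s ^2)).
  assert (Hq1 : forall r, 1 <= q r).
  { intro r. unfold q. rewrite <- sqrt_1 at 1. apply sqrt_le_1_alt. nra. }
  assert (Hphiq : forall r, phi r = du r * / q r) by reflexivity.
  assert (Hq2 : forall r, q r ^ 2 = 1 + du r ^2).
  { intro r; unfold q; apply pow2_sqrt; nra. }
  assert (Hpsi : forall r, sqrt (1 - phi r ^2) = / q r).
  { intro r. rewrite <- (sqrt_pow2 (/ q r)).
    2: { apply Rlt_le, Rinv_0_lt_compat; specialize (Hq1 r); lra. }
    f_equal. rewrite Hphiq. specialize (Hq1 r). specialize (Hq2 r). field_simplify; try lra.
    rewrite Hq2. field. nra. }
  assert (Hp1 : forall r, 0 < 1 - phi r ^2).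
  { intro r. rewrite Hphiq. specialize (Hq1 r). specialize (Hq2 r).
    replace (1 - (du r * / q r)^2) with (/ q r ^2) by (field_simplify; try lra; rewrite Hq2; field; nra).
    apply Rinv_0_lt_compat. nra. }
  assert (Hcont : continuity u).
  { intro r. apply continuity_pt_filterlim; apply (ex_derive_continuous u); eexists; apply Hdu. }
  assert (Hneg : forall r, 0 <= r < Rz -> u r < 0).
  { intros r [Hr0 HrR]. destruct (Req_dec r 0) as [->|Hr]; [lra|].
    destruct (Rlt_le_dec (u r) 0) as [|Hge]; auto.
    assert (Hpos : 0 < u r) by (destruct Hge as [|H]; auto; exfalso; apply (Hnz r); auto; lra).
    destruct (IVT_gen u 0 r 0 Hcont) as [x [Hx Hux]].
    { rewrite Rmin_left, Rmax_right; lra. }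
    rewrite Rmin_left, Rmax_right in Hx by lra.
    exfalso. destruct (Req_dec x 0) as [->|Hx0]; [lra|].
    destruct (Req_dec x r) as [->|Hxr]; [lra|].
    apply (Hnz x); auto; lra. }
  assert (Hnp : forall r, 0 <= r <= Rz -> u r <= 0).
  { intros r [H1 H2]. destruct H2 as [H2 | ->]; [apply Rlt_le, Hneg; lra| lra]. }
  assert (Hphi0 : phi 0 = 0).
  { unfold phi. rewrite Hdu0. unfold Rdiv. ring. }
  assert (Hphipos : forall r, 0 <= r <= Rz -> 0 <= phi r).
  { intros r Hr. destruct (mvt phi (fun s => kappa * u s) 0 r Hphi) as [c [Hc Heq]]; [lra|].
    assert (u c <= 0) by (apply Hnp; lra). rewrite Hphi0 in Heq. assert (0 <= kappa * u c) by nra. assert (0 <= (kappa * u c) * (r - 0)) by (apply Rmult_le_pos; lra). lra. }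
  assert (Hdupos : forall r, 0 <= r <= Rz -> phi r <= du r).
  { intros r Hr. specialize (Hphipos r Hr). rewrite Hphiq in *. specialize (Hq1 r).
    assert (0 < / q r) by (apply Rinv_0_lt_compat; lra).
    assert (/ q r <= 1) by (rewrite <- Rinv_1; apply Rinv_le_contravar; lra).
    assert (0 <= du r) by (apply (Rmult_le_reg_r (/ q r)); lra).
    nra. }
  set (k := - kappa).
  set (s := sqrt k).
  assert (Hk0 : 0 < k) by (unfold k; lra).
  assert (Hs : 0 < s) by (apply sqrt_lt_R0; auto).
  assert (Hss : s * s = k) by (apply sqrt_sqrt; lra).
  split.
  -
    set (Q := fun t => sqrt (1 - phi t ^2) + kappa * u t ^2/2).
    assert (HQ : forall r, is_derive Q r 0).
    { intro r. eapply is_derive_ext_loc; [| eapply is_derive_ext; [intro; reflexivity|]].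
      { apply filter_forall; intro; reflexivity. }
      replace 0 with (-(2 * phi r * (kappa * u r))/(2*sqrt (1 - phi r ^2)) + kappa * u r * du r).
      - apply dQ; auto.
      - rewrite Hpsi, Hphiq. specialize (Hq1 r). field. lra. }
    assert (HQc : forall r, 0 <= r -> Q r = 1 + kappa * u0 ^2 / 2).
    { intros r Hr. destruct (mvt Q (fun _ => 0) 0 r HQ Hr) as [c [_ Heq]].
      assert (Q 0 = 1 + kappa * u0 ^2 / 2).
      { unfold Q. rewrite Hphi0, Hu0. replace (1 - 0^2) with 1 by ring. rewrite sqrt_1. ring. }
      lra. }
    assert (Hbnd : forall r, 0 <= r -> u r ^2 <= u0 ^2).
    { intros r Hr. specialize (HQc r Hr). unfold Q in HQc. rewrite Hpsi in HQc.
      specialize (Hq1 r). assert (/ q r <= 1) by (rewrite <- Rinv_1; apply Rinv_le_contravar; lra).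
      nra. }
    destruct (mvt phi (fun s => kappa * u s) 0 Rz Hphi) as [c [Hc Heq]]; [lra|].
    rewrite Hphi0 in Heq.
    assert (HQR := HQc Rz ltac:(lra)). unfold Q in HQR. rewrite HuR in HQR.
    assert (Hps2 : sqrt (1 - phi Rz ^2) ^2 = 1 - phi Rz ^2) by (apply pow2_sqrt; apply Rlt_le, Hp1).
    assert (Hb := Hbnd c ltac:(lra)).
    assert (Hu02 : u0 ^2 < -2 / kappa).
    { assert (0 < sqrt (-2/kappa)) by lra.
      rewrite <- (pow2_sqrt (-2/kappa)). 2: { apply Rlt_le. apply Rdiv_neg_neg; lra. }
      nra. }
    assert (Hku : - kappa * u0 ^2 < 2).
    { assert (-kappa * (-2 / kappa) = 2) by (field; lra). nra. }
    assert (Hmain : 1 < -2 * kappa * Rz ^2).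
    { set (b := u0 ^2) in *. set (Sq := sqrt (1 - phi Rz ^ 2)) in *.
      assert (HS : Sq = 1 + kappa * b / 2) by (assert (H00 : kappa * 0^2/2 = 0) by (simpl; field; lra); lra).
      assert (Hb0 : 0 < b) by (unfold b; nra).
      assert (phi Rz ^2 = kappa^2 * u c ^2 * Rz^2) by (rewrite Rminus_0_r in Heq; rewrite Rminus_0_r in Heq; nra).
      assert (E : 1 - Sq^2 <= kappa^2 * b * Rz^2).
      { rewrite Hps2. assert (kappa^2 * u c ^2 * Rz^2 <= kappa^2 * b * Rz^2).
        { apply Rmult_le_compat_r; [nra|]. apply Rmult_le_compat_l; nra. }
        lra. }
      rewrite HS in E.
      assert (E2 : (-kappa * b) * (1 + kappa * b / 4) <= (-kappa * b) * (-kappa * Rz^2)) by nra.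
      apply Rmult_le_reg_l in E2; [|nra]. nra. }
    assert (Hx : 0 < -2 * kappa) by lra.
    unfold Rdiv. rewrite Rmult_1_l, <- sqrt_inv.
    rewrite <- (sqrt_pow2 Rz) by lra. apply sqrt_lt_1_alt. split.
    + apply Rlt_le, Rinv_0_lt_compat; lra.
    + apply (Rmult_lt_reg_l (-2*kappa)); auto. rewrite Rinv_r by lra. lra.
  -
    set (T := PI / (2 * s)).
    assert (HT : 0 < T) by (unfold T; apply Rdiv_lt_0_compat; [apply PI_RGT_0| lra]).
    assert (HRT : Rz <= T).
    { destruct (Rle_dec Rz T) as [|HnT]; auto. exfalso. apply Rnot_le_lt in HnT.
      set (J := fun t => phi t * cos (s*t) + s * u t * sin (s*t)).
      set (dJv := fun x => kappa * u x * cos (s*x) - phi x * (s * sin (s*x)) + s * (du x * sin (s*x) + u x * (s * cos (s*x)))).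
      assert (HJ : forall x, is_derive J x (dJv x)) by (intro x; apply dJ; auto).
      destruct (mvt J dJv 0 T HJ) as [c [Hc Heq]]; [lra|].
      assert (HJ0 : J 0 = 0) by (unfold J; rewrite Hphi0, Hu0, Rmult_0_r, sin_0; ring).
      assert (HsT : s * T = PI / 2) by (unfold T; field; lra).
      assert (HJT : J T = s * u T) by (unfold J; rewrite HsT, cos_PI2, sin_PI2; ring).
      assert (HdJ : dJv c = s * sin (s*c) * (du c - phi c)).
      { unfold dJv. replace kappa with (- (s*s)) by (unfold k in Hss; lra). ring. }
      assert (0 <= sin (s*c)).
      { apply sin_ge_0; [nra|]. assert (s * c <= s * T) by nra. pose proof PI_RGT_0. lra. }
      assert (phi c <= du c) by (apply Hdupos; lra).
      assert (u T < 0) by (apply Hneg; lra).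
      assert (0 <= dJv c) by (rewrite HdJ; apply Rmult_le_pos; [apply Rmult_le_pos|]; lra).
      rewrite HJ0, HJT in Heq. nra. }
    apply (Rle_lt_trans _ T); auto.
    rewrite <- (sqrt_pow2 T) by lra. apply sqrt_lt_1_alt. split; [nra|].
    assert (HT2 : T^2 = PI^2 / 4 * / k) by (unfold T; rewrite <- Hss; field; lra).
    assert (Hr : -2 * exp 1 / kappa = 2 * exp 1 * / k) by (unfold k; field; lra).
    rewrite HT2, Hr. apply Rmult_lt_compat_r; [apply Rinv_0_lt_compat; auto|].
    pose proof PI_4. pose proof PI_RGT_0. pose proof (exp_ineq1 1 ltac:(lra)). nra.
Qed.
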